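(* Let $\mathcal{P}$ be a unital partition of the cyclic group $G=\mu_m$ and let $d,d'$ be divisors of $m$. Then $\mathcal{P}_d\cap\mathcal{P}_{d'}\neq\emptyset$ if and only if $\mathcal{P}_d=\mathcal{P}_{d'}$.
   Context: A unital partition of a finite commutative group $G$ is a partition $G=\{1\}\sqcup A_0\sqcup\dots\sqcup A_s$ such that, with $a_i=\sum_{x\in A_i}x\in\mathbb{Z}[G]$, the $\mathbb{Z}$-span of $1$ and the $a_i$ is closed under multiplication in $\mathbb{Z}[G]$. For $d\mid m$, $\mathcal{P}_d$ is the set of members of $\mathcal{P}$ containing an element of order exactly $d$. *)

(* Defs.v *)
From HB Require Import structures.
From mathcomp Require Import all_boot all_order all_algebra all_fingroup all_solvable.
Set Implicit Arguments. Unset Strict Implicit. Unset Printing Implicit Defensive.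
Import GRing.Theory.
Local Open Scope ring_scope.

(* The integral group ring Z[G] of a finite group G (subgroup of gT) is
   modelled by integer-valued functions on gT (supported on G); the product is
   convolution over G. *)
Definition grconv (gT : finGroupType) (G : {set gT}) (f g : gT -> int) : gT -> int :=
  fun z => \sum_(x in G) f x * g ((x^-1 * z)%g).

(* The element sum_{x in A} x of Z[G]. *)
Definition grind (gT : finGroupType) (A : {set gT}) : gT -> int :=
  fun z => (z \in A)%:Z.

Definition in_zspan (gT : finGroupType) (P : {set {set gT}}) (f : gT -> int) : Prop :=
  exists c : {set gT} -> int, forall z, f z = \sum_(A in P) c A * grind A z.

Definition unital_partition (gT : finGroupType) (G : {set gT}) (P : {set {set gT}}) : Prop :=
  [/\ partition P G, [set 1%g] \in P &
      forall f g, in_zspan P f -> in_zspan P g -> in_zspan P (grconv G f g)].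

Definition Pd (gT : finGroupType) (P : {set {set gT}}) (d : nat) : {set {set gT}} :=
  [set A in P | [exists x in A, #[x]%g == d]].

(* Main.v *)
From HB Require Import structures.
Require Import Defs.
From mathcomp Require Import all_boot all_order all_algebra all_fingroup all_solvable.
Set Implicit Arguments. Unset Strict Implicit. Unset Printing Implicit Defensive.

Section Helpers.
Import GRing.Theory.
Local Open Scope ring_scope.

Section Part.
Variables (gT : finGroupType) (G : {group gT}) (P : {set {set gT}}).
Hypothesis hP : partition P G.

Definition blocksat (S : {set gT}) := forall A, A \in P ->
  forall u v, u \in A -> v \in A -> u \in S -> v \in S.

Lemma trivP : trivIset P. Proof. by case/and3P: hP. Qed.
Lemma covP : cover P = G. Proof. exact: cover_partition. Qed.

Lemma block_sub A : A \in P -> A \subset G.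
Proof. by move=> AP; rewrite -covP; apply: bigcup_sup. Qed.

Lemma span_sum (c : {set gT} -> int) z (B : {set gT}) : B \in P -> z \in B ->
  \sum_(A in P) c A * grind A z = c B.
Proof.
move=> BP zB; rewrite (bigD1 B) //= /grind zB GRing.mulr1 big1 ?GRing.addr0 // => A /andP[AP nAB].
case: (boolP (z \in A)) => zA; last by rewrite GRing.mulr0.
by case/eqP: nAB; rewrite -(def_pblock trivP AP zA) (def_pblock trivP BP zB).
Qed.

Lemma span_out (c : {set gT} -> int) z : z \notin G -> \sum_(A in P) c A * grind A z = 0.
Proof.
move=> zG; apply: big1 => A AP; rewrite /grind.
case: (boolP (z \in A)) => zA; last by rewrite GRing.mulr0.
by case/negP: zG; apply: (subsetP (block_sub AP)).
Qed.

Lemma span_const f A u v : in_zspan P f -> A \in P -> u \in A -> v \in A -> f u = f v.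
Proof. by case=> c hc AP uA vA; rewrite !hc (span_sum c AP uA) (span_sum c AP vA). Qed.

Lemma sat_span (S : {set gT}) : S \subset G -> blocksat S -> in_zspan P (grind S).
Proof.
move=> SG sat; exists (fun A : {set gT} => (A \subset S)%:Z) => z.
case: (boolP (z \in G)) => zG; last first.
  rewrite span_out // /grind; case: (boolP (z \in S)) => // zS.
  by case/negP: zG; apply: (subsetP SG).
have zc : z \in cover P by rewrite covP.
rewrite (span_sum _ (pblock_mem zc) (eqbRL (mem_pblock P z) zc)) /grind.
congr (Posz (nat_of_bool _)); apply/idP/idP => [zS|/subsetP]; last first.
  by apply; rewrite mem_pblock.
apply/subsetP => v vB; apply: (sat _ (pblock_mem zc) z v) => //.
by rewrite mem_pblock.
Qed.

Lemma sat_block B : B \in P -> blocksat B.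
Proof.
move=> BP A AP u v uA vA uB.
by rewrite -(def_pblock trivP BP uB) (def_pblock trivP AP uA).
Qed.

End Part.

Section Mx.
Variables (gT : finGroupType) (n : nat) (hN : #|gT| = n.+1) (R : nzRingType).
Definition ix (x : gT) : 'I_n.+1 := cast_ord hN (enum_rank x).
Definition vx (i : 'I_n.+1) : gT := enum_val (cast_ord (esym hN) i).
Lemma vxK : cancel ix vx. Proof. by move=> x; rewrite /vx /ix cast_ordK enum_rankK. Qed.
Lemma ixK : cancel vx ix. Proof. by move=> i; rewrite /vx /ix enum_valK cast_ordKV. Qed.
Lemma sum_vx (F : gT -> R) : \sum_(i < n.+1) F (vx i) = \sum_x F x.
Proof.
rewrite (reindex ix) /=; last by apply: onW_bij; exists vx; [apply: vxK | apply: ixK].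
by apply: eq_bigr => x _; rewrite vxK.
Qed.

Definition mxf (f : gT -> int) : 'M[R]_n.+1 :=
  \matrix_(i, j) (f ((vx i)^-1 * vx j)%g)%:~R.

Lemma eq_mxf f g : f =1 g -> mxf f = mxf g.
Proof. by move=> e; apply/matrixP => i j; rewrite !mxE e. Qed.

Lemma intr_sum (I : Type) (r : seq I) (Pr : pred I) (F : I -> int) :
  (\sum_(i <- r | Pr i) F i)%:~R = \sum_(i <- r | Pr i) ((F i)%:~R : R).
Proof. by apply: (big_morph (fun z : int => z%:~R : R)) => [x y|]; rewrite ?intrD. Qed.

Lemma mxf_conv (H : {set gT}) f g : (forall x, x \notin H -> f x = 0) ->
  mxf (grconv H f g) = mxf f *m mxf g.
Proof.
move=> fH; apply/matrixP => i j; rewrite !mxE /grconv intr_sum.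
under [RHS]eq_bigr => k _ do rewrite !mxE.
rewrite (sum_vx (fun w => (f ((vx i)^-1 * w)%g)%:~R * (g (w^-1 * vx j)%g)%:~R)).
rewrite [RHS](reindex_inj (mulgI (vx i))) /=.
rewrite [RHS](bigID (fun x => x \in H)) /= [X in _ + X]big1 ?addr0; last first.
  by move=> x xH; rewrite mulKg fH ?mul0r.
apply: eq_bigr => x _; rewrite intrM mulKg invMg mulgA.
done.
Qed.

Lemma mxf1 : mxf (grind [set 1%g]) = 1.
Proof.
apply/matrixP => i j; rewrite !mxE /grind in_set1 -eq_mulVg1 (inj_eq (can_inj ixK)).
by case: (i == j).
Qed.

Definition Pm x := mxf (grind [set x]).

Lemma PmM x y : Pm x * Pm y = Pm (x * y)%g.
Proof.
rewrite -mulmxE /Pm -(mxf_conv (H := [set: gT])); last by move=> z; rewrite in_setT.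
apply: eq_mxf => z; rewrite /grconv (bigD1 x) ?in_setT //= big1 ?addr0.
  by rewrite /grind !in_set1 eqxx mul1r (canF_eq (mulKVg x)).
by move=> w /andP[_ wx]; rewrite /grind in_set1 (negPf wx) mul0r.
Qed.

Lemma PmX x k : Pm x ^+ k = Pm (x ^+ k)%g.
Proof.
elim: k => [|k IH]; first by rewrite expr0 expg0 /Pm mxf1.
by rewrite exprS IH PmM expgS.
Qed.

Lemma mxf_grind (S : {set gT}) : mxf (grind S) = \sum_(x in S) Pm x.
Proof.
apply/matrixP => i j; rewrite summxE mxE.
under eq_bigr => x _ do rewrite mxE /grind in_set1.
set u := ((vx i)^-1 * vx j)%g; rewrite /grind.
case: (boolP (u \in S)) => uS.
  rewrite (bigD1 u) //= eqxx big1 ?addr0 // => x /andP[_ xu].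
  by rewrite eq_sym (negPf xu).
rewrite big1 // => x xS; case: eqP => // eux.
by rewrite eux xS in uS.
Qed.

End Mx.

Section Frob.
Variables (gT : finGroupType) (n : nat) (hN : #|gT| = n.+1) (p : nat) (pr : prime p).

Local Notation M := ('M['F_p]_n.+1).

Lemma pchar_M : p \in [pchar M].
Proof.
apply/andP; split => //; apply/eqP.
have -> : (p%:R : M) = (p%:R : 'F_p)%:M by rewrite rmorph_nat.
by rewrite pchar_Fp_0 // raddf0.
Qed.

Lemma frob_sum (s : seq gT) : {in s &, forall x y, commute x y} ->
  (\sum_(x <- s) Pm hN 'F_p x) ^+ p = \sum_(x <- s) Pm hN 'F_p (x ^+ p)%g.
Proof.
elim: s => [|a s IH] cs.
  by rewrite !big_nil expr0n eqn0Ngt prime_gt0.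
rewrite !big_cons -(pFrobenius_autE pchar_M) pFrobenius_autD_comm; last first.
  rewrite big_seq; apply: commr_sum => y ys.
  rewrite /GRing.comm !PmM cs ?inE ?eqxx ?ys ?orbT //.
rewrite !pFrobenius_autE PmX IH // => x y xs ys.
by apply: cs; rewrite inE ?xs ?ys orbT.
Qed.
End Frob.

Fixpoint cpow (gT : finGroupType) (G S : {set gT}) (k : nat) : gT -> int :=
  if k is k'.+1 then grconv G (grind S) (cpow G S k') else grind [set 1%g].

Definition pw (gT : finGroupType) (k : nat) (S : {set gT}) := [set (x ^+ k)%g | x in S].

Lemma key (gT : finGroupType) (G : {group gT}) (S : {set gT}) p z :
  prime p -> abelian G -> coprime #|G| p -> S \subset G ->
  ((cpow G S p z)%:~R : 'F_p) = ((z \in pw p S) : nat)%:R.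
Proof.
move=> pr abG cop SG.
have [n hN] : exists n, #|gT| = n.+1.
  exists #|gT|.-1; rewrite prednK //; rewrite -cardsT; exact: (cardG_gt0 [set: gT]).
have E k : mxf hN 'F_p (cpow G S k) = (mxf hN 'F_p (grind S)) ^+ k.
  elim: k => [|k IH] /=; first by rewrite mxf1 expr0.
  rewrite mxf_conv ?exprS ?IH -?mulmxE // => x xS; rewrite /grind.
  by case: (boolP (x \in S)) => // /(subsetP SG) xG; rewrite xG in xS.
have F := E p; rewrite mxf_grind -big_enum frob_sum // in F; last first.
  move=> x y; rewrite !mem_enum => /(subsetP SG) xG /(subsetP SG) yG.
  by move/centsP: abG => ab; apply: ab.
have := congr1 (fun M : 'M['F_p]_n.+1 => M (ix hN 1%g) (ix hN z)) F.
rewrite /= mxE !vxK invg1 mul1g => ->; rewrite summxE big_enum /=.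
under eq_bigr => x _ do rewrite mxE !vxK invg1 mul1g /grind in_set1.
case: (boolP (z \in pw p S)) => [/imsetP[y yS ->]|zS].
  rewrite (bigD1 y) //= eqxx big1 ?addr0 // => x /andP[xS xy].
  case: eqP => // e; case/negP: xy; apply/eqP.
  have := congr1 (fun u => (u ^+ expg_invn G p)%g) e.
  by rewrite !(expgK cop) // ?(subsetP SG).
rewrite big1 // => x xS; case: eqP => // e; case/negP: zS.
by apply/imsetP; exists x.
Qed.

Section Sat.
Variables (gT : finGroupType) (G : {group gT}) (P : {set {set gT}}).
Hypothesis hU : unital_partition G P.
Hypothesis abG : abelian G.

Lemma pw_sub k (S : {set gT}) : S \subset G -> pw k S \subset G.
Proof.
move=> SG; apply/subsetP => x /imsetP[y yS ->]; exact/groupX/(subsetP SG).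
Qed.

Lemma sat_prime (p : nat) (S : {set gT}) : prime p -> coprime #|G| p ->
  S \subset G -> blocksat P S -> blocksat P (pw p S).
Proof.
case: hU => hP h1 hcl pr cop SG sat.
have spk k : in_zspan P (cpow G S k).
  elim: k => [|k IH] /=.
    by apply: (sat_span hP); [rewrite sub1set group1 | exact: (sat_block hP)].
  by apply: hcl => //; apply: (sat_span hP).
move=> A AP u v uA vA uS.
have e := span_const hP (spk p) AP uA vA.
have := congr1 (fun z : int => (z%:~R : 'F_p)) e.
rewrite /= (@key _ G S p u pr abG cop SG) (@key _ G S p v pr abG cop SG) uS.
by case: (v \in pw p S) => // /eqP; rewrite mulr0n mulr1n oner_eq0.
Qed.

Lemma sat_pw (k : nat) (S : {set gT}) : (0 < k)%N -> coprime #|G| k ->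
  S \subset G -> blocksat P S -> blocksat P (pw k S).
Proof.
elim/ltn_ind: k S => k IH S k0 cop SG sat.
case: (ltngtP k 1) => [|k1|->]; first by rewrite ltnNge k0.
  have pr := pdiv_prime k1.
  have dk := pdiv_dvd k.
  set q := pdiv k in pr dk.
  have kk : k = (k %/ q * q)%N by rewrite divnK.
  have lt : (k %/ q < k)%N by rewrite ltn_Pdiv ?prime_gt1.
  have q0 : (0 < k %/ q)%N by rewrite divn_gt0 ?prime_gt0 // dvdn_leq.
  have e : pw k S = pw q (pw (k %/ q) S).
    rewrite /pw -imset_comp {1}kk; apply: eq_imset => x /=; exact: expgM.
  rewrite e; apply: sat_prime => //.
  - exact: coprime_dvdr cop.
  - exact: pw_sub.
  apply: IH => //; apply: (coprime_dvdr _ cop).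
  by rewrite {2}kk dvdn_mulr.

have -> : pw 1%N S = S by rewrite /pw (eq_imset _ (@expg1 _)) imset_id.
done.
Qed.
End Sat.

End Helpers.

Lemma lift_coprime j d m : 0 < m -> d %| m -> coprime j d ->
  exists k, [/\ 0 < k, coprime k m & k = j %[mod d]].
Proof.
move=> m0 dm cjd.
set t := \prod_(q <- primes m | ~~ (q %| j)) q.
have tq q : prime q -> q %| m -> (q %| t) = ~~ (q %| j).
  move=> qp qm; have qpm : q \in primes m by rewrite mem_primes qp m0.
  apply/idP/idP => [|nqj].
    rewrite /t Euclid_dvd_prod // big_has_cond => /hasP[x xm /andP[nxj qx]].
    have xp : prime x by move: xm; rewrite mem_primes => /andP[].
    by rewrite (eqP (etrans (esym (dvdn_prime2 qp xp)) qx)).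
  by rewrite /t (big_rem _ qpm) nqj dvdn_mulr.
have c0 : coprime (j + d * t) m.
  apply/eqP; set g := gcdn _ _.
  have g0 : 0 < g by rewrite gcdn_gt0 m0 orbT.
  case: (ltngtP g 1) => [|g1|//]; first by rewrite ltnNge g0.
  have qp := pdiv_prime g1; have qg := pdiv_dvd g; set q := pdiv g in qp qg.
  have qk : q %| j + d * t by apply: dvdn_trans qg (dvdn_gcdl _ _).
  have qm : q %| m by apply: dvdn_trans qg (dvdn_gcdr _ _).
  case qj : (q %| j).
    have : q %| d * t by rewrite -(dvdn_addr _ qj).
    rewrite Euclid_dvdM // tq // qj orbF => qd.
    have : q %| gcdn j d by rewrite dvdn_gcd qj.
    by rewrite (eqP cjd) dvdn1 => /eqP q1; rewrite q1 in qp.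
  have : q %| d * t by rewrite dvdn_mull // tq // qj.
  by move=> qdt; move: qk; rewrite dvdn_addl // qj.
exists (j + d * t + m); split.
- by rewrite addn_gt0 m0 orbT.
- by rewrite /coprime gcdnC gcdnDr gcdnC.
- by rewrite -modnDm (eqP dm) addn0 modn_mod mulnC addnC modnMDl.
Qed.

Lemma subPd (gT : finGroupType) (G : {group gT}) (P : {set {set gT}}) d d' A :
  cyclic G -> unital_partition G P -> A \in Pd P d -> A \in Pd P d' ->
  Pd P d \subset Pd P d'.
Proof.
move=> cycG hU; have abG := cyclic_abelian cycG.
have [hP _ _] := hU.
case/setIdP=> AP /exists_inP[x xA /eqP ox] /setIdP[_ /exists_inP[y yA /eqP oy]].
apply/subsetP => B /setIdP[BP /exists_inP[z zB /eqP oz]].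
have xG := subsetP (block_sub hP AP) x xA.
have zG := subsetP (block_sub hP BP) z zB.
have exz : (<[x]> = <[z]>)%g.
  apply/eqP; rewrite (eq_subG_cyclic cycG) ?cycle_subG //.
  by apply/eqP; rewrite -/(order x) -/(order z) ox oz.
have : x \in <[z]>%g by rewrite -exz cycle_id.
case/cycleP => i xi.
have d0 : 0 < d by rewrite -oz order_gt0.
have cid : coprime i d.
  move: ox; rewrite xi orderXgcd oz => e.
  rewrite /coprime gcdnC; apply/eqP.
  have g0 : 0 < gcdn d i by rewrite gcdn_gt0 d0.
  case: (ltngtP (gcdn d i) 1) => [|g1|//]; first by rewrite ltnNge g0.
  by have := ltn_Pdiv g1 d0; rewrite e ltnn.
have m0 : 0 < #|G| by exact: cardG_gt0.
have [k [k0 ckm kmod]] := lift_coprime m0 (eq_ind _ (fun a => a %| #|G|) (order_dvdG zG) _ oz) cid.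
have satT : blocksat P (pw k B).
  apply: (sat_pw hU abG k0 _ (block_sub hP BP) (sat_block hP BP)).
  by rewrite coprime_sym.
have xT : x \in pw k B.
  apply/imsetP; exists z => //.
  by rewrite xi -(expg_mod_order z i) -(expg_mod_order z k) oz kmod.
case/imsetP: (satT A AP x y xA yA xT) => w wB yw.
have wG := subsetP (block_sub hP BP) w wB.
have cw : coprime #[w]%g k.
  by rewrite coprime_sym; apply: coprime_dvdr (order_dvdG wG) ckm.
apply/setIdP; split => //; apply/exists_inP; exists w => //.
by rewrite -oy yw orderXgcd (eqP cw) divn1.
Qed.

Theorem corollary3p4 (gT : finGroupType) (G : {group gT}) (m : nat)
  (P : {set {set gT}}) (d d' : nat) :
  cyclic G -> #|G| = m -> unital_partition G P ->
  (d %| m)%N -> (d' %| m)%N ->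
  (Pd P d :&: Pd P d' != set0 <-> Pd P d = Pd P d').
Proof.
move=> cycG cG hU dm dm'; split.
  case/set0Pn => A /setIP[A1 A2].
  by apply/eqP; rewrite eqEsubset (subPd cycG hU A1 A2) (subPd cycG hU A2 A1).
move=> e; rewrite e setIid.
have [hP _ _] := hU.
case/cyclicP: cycG => g Gg.
have m0 : 0 < m by rewrite -cG cardG_gt0.
have og : #[g]%g = m by rewrite -cG Gg.
have d0 : 0 < d' by move: dm'; apply: contraTT; rewrite -eqn0Ngt => /eqP ->; rewrite dvd0n -lt0n.
set x := (g ^+ (m %/ d'))%g.
have ox : #[x]%g = d'.
  rewrite orderXdiv og ?dvdn_div //.
  rewrite -{1}(divnK dm') mulKn // divn_gt0 // dvdn_leq //.
have xG : x \in G by rewrite Gg groupX // cycle_id.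
have xc : x \in cover P by rewrite (cover_partition hP).
apply/set0Pn; exists (pblock P x); apply/setIdP; split; first exact: pblock_mem.
by apply/exists_inP; exists x; rewrite ?mem_pblock ?ox.
Qed.
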